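(* Let $\mathbb X$ be a basic space and $\mathcal D=(D,<,\rho)$ a computable partially ordered set. There exists a function $E:\mathbb N\times\mathbb X\to D$ in $\mathrm{Max}_{\mathrm{PR}}[\mathbb N\times\mathbb X\to\mathcal D]$ such that $\{E_n:n\in\mathbb N\}=\mathrm{Max}_{\mathrm{PR}}[\mathbb X\to\mathcal D]$, where $E_n:\mathbb X\to D$ is the partial function $x\mapsto E(n,x)$.
   Context: A basic space is a finite non-empty product of sets each of which is $\mathbb N$, $\mathbb Z$, or $A^*$ for some finite alphabet $A$. A computable partially ordered set is a triple $\mathcal D=(D,<,\rho)$ where $\rho:\mathbb N\to D$ is a bijection and $<$ is a strict partial order on $D$ with $\{(m,n):\rho(m)<\rho(n)\}$ computable; a partial function into $D$ is partial computable if its composition with $\rho^{-1}$ is. For a basic space $\mathbb Y$ and a partial $f:\mathbb Y\times\mathbb N\to D$ monotone increasing in its second argument on its domain, $\max^{\mathcal D}f$ is the partial function on $\mathbb Y$ defined exactly at those $y$ for which $\{f(y,t):t\in\mathbb N,\ f(y,t)\text{ defined}\}$ is finite and non-empty, with value its maximum element. $\mathrm{Max}_{\mathrm{PR}}[\mathbb Y\to\mathcal D]$ is the class of all $\max^{\mathcal D}f$ with $f$ partial computable and monotone increasing in its second argument. *)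

(* Defs.v *)
From mathcomp Require Import all_boot.
From mathcomp Require Import ssralg ssrint.
From Stdlib Require List.
Set Implicit Arguments. Unset Strict Implicit. Unset Printing Implicit Defensive.

Inductive recf : Type :=
| RZero : recf
| RSucc : recf
| RProj : nat -> recf
| RComp : recf -> list recf -> recf
| RPrec : recf -> recf -> recf
| RMu   : recf -> recf.

Inductive ev : recf -> seq nat -> nat -> Prop :=
| evZ v : ev RZero v 0
| evS x v : ev RSucc (x :: v) x.+1
| evP i v : i < size v -> ev (RProj i) v (nth 0 v i)
| evC f gs v ws y : evs gs v ws -> ev f ws y -> ev (RComp f gs) v y
| evR0 f g v y : ev f v y -> ev (RPrec f g) (0 :: v) y
| evRS f g n v r y :
    ev (RPrec f g) (n :: v) r -> ev g (n :: r :: v) y -> ev (RPrec f g) (n.+1 :: v) y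
| evM f v n :
    ev f (n :: v) 0 -> (forall m, m < n -> exists k, ev f (m :: v) k.+1) ->
    ev (RMu f) v n
with evs : list recf -> seq nat -> seq nat -> Prop :=
| evs_nil v : evs nil v [::]
| evs_cons g gs v w ws : ev g v w -> evs gs v ws -> evs (g :: gs) v (w :: ws).

(* Basic spaces: finite non-empty products of N, Z, A^* (A = 'I_k).    *)
Inductive comp : Type := CN | CZ | CW (k : nat).

Definition comp_type (c : comp) : Type :=
  match c with CN => nat | CZ => int | CW k => seq 'I_k end.

Record bspace : Type := BSpace { bhd : comp; btl : list comp }.

Fixpoint elts (c : comp) (cs : list comp) : Type :=
  match cs with
  | nil => comp_type c
  | c' :: cs' => (comp_type c * elts c' cs')%type
  end.

Definition elt (Y : bspace) : Type := elts (bhd Y) (btl Y).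

Definition NX (Y : bspace) : bspace := BSpace CN (bhd Y :: btl Y).

Definition cpair (a b : nat) : nat := ((a + b) * (a + b).+1) %/ 2 + b.

Definition code_int (z : int) : nat :=
  match z with Posz n => n.*2 | Negz n => n.*2.+1 end.

Fixpoint code_word k (w : seq 'I_k) : nat :=
  match w with [::] => 0 | a :: w' => (cpair (nat_of_ord a) (code_word w')).+1 end.

Definition code_comp (c : comp) : comp_type c -> nat :=
  match c return comp_type c -> nat with
  | CN => fun n => n
  | CZ => code_int
  | CW k => @code_word k
  end.

Fixpoint code_elts (c : comp) (cs : list comp) : elts c cs -> nat :=
  match cs return elts c cs -> nat with
  | nil => code_comp (c := c)
  | c' :: cs' => fun p => cpair (code_comp p.1) (code_elts p.2)
  end.

Definition code (Y : bspace) (y : elt Y) : nat := code_elts y.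

Definition comp_poset (D : Type) (lt : D -> D -> Prop) (rho : nat -> D) : Prop :=
  [/\ (forall d, ~ lt d d),
      (forall a b c, lt a b -> lt b c -> lt a c),
      (forall m n, rho m = rho n -> m = n),
      (forall d, exists n, rho n = d) &
      exists e : recf, forall m n,
        (lt (rho m) (rho n) -> ev e [:: m; n] 1) /\
        (~ lt (rho m) (rho n) -> ev e [:: m; n] 0)].

Definition pcomp (D : Type) (rho : nat -> D) (Y : bspace) (f : elt Y -> option D) : Prop :=
  exists e : recf, forall y n, ev e [:: code y] n <-> f y = Some (rho n).

Definition pcomp2 (D : Type) (rho : nat -> D) (Y : bspace)
    (f : elt Y -> nat -> option D) : Prop :=
  exists e : recf, forall y t n, ev e [:: code y; t] n <-> f y t = Some (rho n).

Definition monotone2 (D : Type) (lt : D -> D -> Prop) (Y : bspace)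
    (f : elt Y -> nat -> option D) : Prop :=
  forall y t t' d d', t <= t' -> f y t = Some d -> f y t' = Some d' -> d = d' \/ lt d d'.

Definition is_maxval (D : Type) (lt : D -> D -> Prop) (Y : bspace)
    (f : elt Y -> nat -> option D) (y : elt Y) (d : D) : Prop :=
  [/\ (exists l : list D, forall d', (exists t, f y t = Some d') <-> List.In d' l),
      (exists t, f y t = Some d) &
      (forall t d', f y t = Some d' -> d' = d \/ lt d' d)].

Definition is_max_of (D : Type) (lt : D -> D -> Prop) (Y : bspace)
    (f : elt Y -> nat -> option D) (g : elt Y -> option D) : Prop :=
  forall y d, g y = Some d <-> is_maxval lt f y d.

Definition MaxPR (D : Type) (lt : D -> D -> Prop) (rho : nat -> D) (Y : bspace)
    (g : elt Y -> option D) : Prop :=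
  exists f : elt Y -> nat -> option D,
    [/\ pcomp2 rho f, monotone2 lt f & is_max_of lt f g].

(* Main.v *)
Require Import Defs.
From mathcomp Require Import all_boot zify.
From Stdlib Require Import Classical ClassicalEpsilon.
Set Implicit Arguments. Unset Strict Implicit. Unset Printing Implicit Defensive.


Definition ev_ind2 (P : recf -> seq nat -> nat -> Prop)
  (P0 : seq recf -> seq nat -> seq nat -> Prop)
  (hZ : forall v, P RZero v 0)
  (hS : forall x v, P RSucc (x :: v) x.+1)
  (hP : forall i v, i < size v -> P (RProj i) v (nth 0 v i))
  (hC : forall f gs v ws y, evs gs v ws -> P0 gs v ws -> ev f ws y -> P f ws y -> P (RComp f gs) v y)
  (hR0 : forall f g v y, ev f v y -> P f v y -> P (RPrec f g) (0 :: v) y)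
  (hRS : forall f g n v r y, ev (RPrec f g) (n :: v) r -> P (RPrec f g) (n :: v) r ->
          ev g [:: n, r & v] y -> P g [:: n, r & v] y -> P (RPrec f g) (n.+1 :: v) y)
  (hM : forall f v n, ev f (n :: v) 0 -> P f (n :: v) 0 ->
          (forall m, m < n -> exists k, ev f (m :: v) k.+1 /\ P f (m :: v) k.+1) ->
          P (RMu f) v n)
  (hN : forall v, P0 [::] v [::])
  (hK : forall g gs v w ws, ev g v w -> P g v w -> evs gs v ws -> P0 gs v ws -> P0 (g :: gs) v (w :: ws)) :
  forall e v y, ev e v y -> P e v y :=
  fix F e v y (H : ev e v y) {struct H} : P e v y :=
    match H in ev e v y return P e v y with
    | evZ v => hZ v
    | evS x v => hS x v
    | evP i v Hi => @hP i v Hi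
    | evC f gs v ws y Hs Hf => @hC f gs v ws y Hs (G _ _ _ Hs) Hf (F _ _ _ Hf)
    | evR0 f g v y Hf => @hR0 f g v y Hf (F _ _ _ Hf)
    | evRS f g n v r y H1 H2 => @hRS f g n v r y H1 (F _ _ _ H1) H2 (F _ _ _ H2)
    | evM f v n H0 Hl => @hM f v n H0 (F _ _ _ H0)
        (fun m Hm => match Hl m Hm with ex_intro k Hk => ex_intro _ k (conj Hk (F _ _ _ Hk)) end)
    end
  with G gs v ws (H : evs gs v ws) {struct H} : P0 gs v ws :=
    match H in evs gs v ws return P0 gs v ws with
    | evs_nil v => hN v
    | evs_cons g gs v w ws Hg Hs => @hK g gs v w ws Hg (F _ _ _ Hg) Hs (G _ _ _ Hs)
    end
  for F.

Lemma ev_det e v y : ev e v y -> forall y', ev e v y' -> y = y'.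
Proof.
move: e v y; apply: (@ev_ind2 (fun e v y => forall y', ev e v y' -> y = y')
   (fun gs v ws => forall ws', evs gs v ws' -> ws = ws')).
- by move=> v y' H; inversion H.
- by move=> x v y' H; inversion H.
- by move=> i v _ y' H; inversion H.
- move=> f gs v ws y _ IH1 _ IH2 y' H; inversion H; subst.
  have E := IH1 _ ltac:(eassumption); subst. by apply: IH2.
- move=> f g v y _ IH y' H; inversion H; subst; by apply: IH.
- move=> f g n v r y _ IH1 _ IH2 y' H; inversion H; subst.
  have E := IH1 _ ltac:(eassumption); subst. by apply: IH2.
- move=> f v n _ IH0 Hlt y' H; inversion H; subst. idtac.
  case: (ltngtP n y') => // [lt1|lt2].
  + have [k Hk] := H2 _ lt1. by have := IH0 _ Hk.
  + have [k [_ Hk]] := Hlt _ lt2. by have := Hk _ H1.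
- by move=> v ws' H; inversion H.
- move=> g gs v w ws _ IH1 _ IH2 ws' H; inversion H; subst.
  by rewrite (IH1 _ ltac:(eassumption)) (IH2 _ ltac:(eassumption)).
Qed.

Definition comput k (h : seq nat -> nat) :=
  exists e, forall v, size v = k -> ev e v (h v).

Definition comput1 (F : nat -> nat) := comput 1 (fun v => F (nth 0 v 0)).
Definition comput2 (F : nat -> nat -> nat) := comput 2 (fun v => F (nth 0 v 0) (nth 0 v 1)).
Definition comput3 (F : nat -> nat -> nat -> nat) :=
  comput 3 (fun v => F (nth 0 v 0) (nth 0 v 1) (nth 0 v 2)).

Fixpoint precf (a : nat) (b : nat -> nat -> nat) (n : nat) : nat :=
  match n with 0 => a | n'.+1 => b n' (precf a b n') end.

Lemma comput_ext k h h' : (forall v, size v = k -> h v = h' v) -> comput k h -> comput k h'.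
Proof. move=> E [e He]; exists e => v Hv; rewrite -E //; exact: He. Qed.

Lemma comput_proj k i : i < k -> comput k (fun v => nth 0 v i).
Proof. move=> Hi; exists (RProj i) => v Hv; constructor; by rewrite Hv. Qed.

Fixpoint cstp c := match c with 0 => RZero | c'.+1 => RComp RSucc [:: cstp c'] end.
Lemma ev_cstp c v : ev (cstp c) v c.
Proof.
elim: c => [|c IH] /=; first constructor.
apply: (@evC _ _ _ [:: c]); [constructor; [exact: IH| constructor] | constructor].
Qed.

Lemma comput_const k c : comput k (fun _ => c).
Proof. exists (cstp c) => v _; exact: ev_cstp. Qed.

Lemma comput_succ k h : comput k h -> comput k (fun v => (h v).+1).
Proof.
move=> [e He]; exists (RComp RSucc [:: e]) => v Hv.
apply: (@evC _ _ _ [:: h v]); [constructor; [exact: He| constructor] | constructor].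
Qed.

Lemma comp1 k F a : comput1 F -> comput k a -> comput k (fun v => F (a v)).
Proof.
move=> [eF HF] [ea Ha]; exists (RComp eF [:: ea]) => v Hv.
apply: (@evC _ _ _ [:: a v]); first by constructor; [exact: Ha| constructor].
exact: (HF [:: a v]).
Qed.

Lemma comp2 k F a b : comput2 F -> comput k a -> comput k b -> comput k (fun v => F (a v) (b v)).
Proof.
move=> [eF HF] [ea Ha] [eb Hb]; exists (RComp eF [:: ea; eb]) => v Hv.
apply: (@evC _ _ _ [:: a v; b v]).
  by constructor; [exact: Ha| constructor; [exact: Hb | constructor]].
exact: (HF [:: a v; b v]).
Qed.

Lemma comp3 k F a b c : comput3 F -> comput k a -> comput k b -> comput k c ->
  comput k (fun v => F (a v) (b v) (c v)).
Proof.
move=> [eF HF] [ea Ha] [eb Hb] [ec Hc]; exists (RComp eF [:: ea; eb; ec]) => v Hv.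
apply: (@evC _ _ _ [:: a v; b v; c v]).
  by constructor; [exact: Ha| constructor; [exact: Hb | constructor; [exact: Hc|constructor]]].
exact: (HF [:: a v; b v; c v]).
Qed.

Lemma evs_projs j k w : j + k <= size w ->
  evs (map RProj (iota j k)) w (map (nth 0 w) (iota j k)).
Proof.
elim: k j => [|k IH] j H /=; first constructor.
constructor; first by constructor; lia.
apply: IH; lia.
Qed.

Lemma map_nth_iota0 (w : seq nat) : map (nth 0 w) (iota 0 (size w)) = w.
Proof. exact: (mkseq_nth 0 w). Qed.

Lemma map_nth_iotaS x (w : seq nat) j n :
  map (nth 0 (x :: w)) (iota j.+1 n) = map (nth 0 w) (iota j n).
Proof. by elim: n j => [|n IH] j //=; rewrite IH. Qed.

Lemma map_nth_iota_drop j (w : seq nat) :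
  map (nth 0 w) (iota j (size w - j)) = drop j w.
Proof.
elim: w j => [|x w IH] j /=; first by case: j.
case: j => [|j]; first by rewrite subn0 drop0 -[RHS](map_nth_iota0 (x :: w)).
by rewrite subSS map_nth_iotaS IH.
Qed.

Lemma comput_lift k j h : comput k h -> comput (j + k) (fun w => h (drop j w)).
Proof.
move=> [e He]; exists (RComp e (map RProj (iota j k))) => w Hw.
apply: evC; first by apply: evs_projs; lia.
have -> : k = size w - j by lia.
rewrite map_nth_iota_drop; apply: He; rewrite size_drop; lia.
Qed.

Lemma comput_rec k hn ha hb : comput k hn -> comput k ha -> comput k.+2 hb ->
  comput k (fun v => precf (ha v) (fun i r => hb (i :: r :: v)) (hn v)).
Proof.
move=> [en Hn] [ea Ha] [eb Hb].
exists (RComp (RPrec ea eb) (en :: map RProj (iota 0 k))) => v Hv.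
apply: (@evC _ _ _ (hn v :: v)).
  constructor; first exact: Hn.
  by rewrite -[X in evs _ _ X]map_nth_iota0; rewrite -Hv; apply: evs_projs.
elim: (hn v) => [|N IH] /=; first by constructor; exact: Ha.
apply: evRS; first exact: IH.
apply: Hb => /=; by rewrite Hv.
Qed.

Lemma comput_addn : comput2 addn.
Proof.
apply: (comput_ext (h := fun v => precf (nth 0 v 0) (fun i r => (nth 0 (i :: r :: v) 1).+1) (nth 0 v 1))).
  move=> v _ /=; elim: (nth 0 v 1) => [|n IH] /=; [by rewrite addn0 | by rewrite IH addnS].
apply: (comput_rec (hn := fun v => nth 0 v 1) (ha := fun v => nth 0 v 0) (hb := fun w => (nth 0 w 1).+1)); try apply: comput_proj => //.
by apply: comput_succ; apply: comput_proj.
Qed.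

Lemma comput_predn : comput1 predn.
Proof.
apply: (comput_ext (h := fun v => precf 0 (fun i r => nth 0 (i :: r :: v) 0) (nth 0 v 0))).
  by move=> v _ /=; case: (nth 0 v 0).
apply: (comput_rec (hn := fun v => nth 0 v 0) (ha := fun v => 0) (hb := fun w => nth 0 w 0)); [exact: comput_proj | exact: comput_const | exact: comput_proj].
Qed.

Lemma comput_subn : comput2 subn.
Proof.
apply: (comput_ext (h := fun v => precf (nth 0 v 0) (fun i r => predn (nth 0 (i :: r :: v) 1)) (nth 0 v 1))).
  move=> v _ /=; elim: (nth 0 v 1) => [|n IH] /=; [by rewrite subn0 | by rewrite IH subnS].
apply: (comput_rec (hn := fun v => nth 0 v 1) (ha := fun v => nth 0 v 0) (hb := fun w => predn (nth 0 w 1))); try apply: comput_proj => //.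
apply: comp1; [exact: comput_predn | exact: comput_proj].
Qed.

Lemma comput_ifz k c a b : comput k c -> comput k a -> comput k b ->
  comput k (fun v => if c v == 0 then a v else b v).
Proof.
move=> Hc Ha Hb.
apply: (comput_ext (h := fun v => precf (a v) (fun i r => b (drop 2 (i :: r :: v))) (c v))).
  by move=> v _ /=; rewrite drop0; case: (c v).
exact: (@comput_rec k c a (fun w => b (drop 2 w)) Hc Ha (comput_lift 2 Hb)).
Qed.

Lemma comput_ifeq k a b x y : comput k a -> comput k b -> comput k x -> comput k y ->
  comput k (fun v => if a v == b v then x v else y v).
Proof.
move=> Ha Hb Hx Hy.
apply: (comput_ext (h := fun v => if (a v - b v) + (b v - a v) == 0 then x v else y v)).
  move=> v _; case: eqP => H; case: eqP => H' //; lia.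
apply: comput_ifz => //; apply: comp2; [exact: comput_addn| |];
  apply: comp2 => //; exact: comput_subn.
Qed.

Create HintDb compdb.
#[export] Hint Resolve comput_addn comput_subn comput_predn : compdb.

Ltac solve_comput :=
  first
  [ apply: comput_proj; done
  | apply: comput_const
  | apply: comput_ifeq; solve_comput
  | apply: comput_succ; solve_comput
  | apply: comp3; [by eauto with compdb | solve_comput | solve_comput | solve_comput]
  | apply: comp2; [by eauto with compdb | solve_comput | solve_comput]
  | apply: comp1; [by eauto with compdb | solve_comput] ].

Goal comput 2 (fun v => if nth 0 v 0 == 3 then (nth 0 v 1 - 2).+1 else (nth 0 v 0).-1 + 5).
solve_comput.
Qed.

Definition tri n := precf 0 (fun i r => r + i.+1) n.

Lemma triS n : tri n.+1 = tri n + n.+1. Proof. by []. Qed.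
Lemma tri0 : tri 0 = 0. Proof. by []. Qed.

Lemma tri_double n : (tri n).*2 = n * n.+1.
Proof. elim: n => [|n IH] //; rewrite triS doubleD IH; lia. Qed.

Lemma cpair_tri a b : cpair a b = tri (a + b) + b.
Proof. by rewrite /cpair -tri_double divn2 doubleK. Qed.

Lemma tri_mono m n : m <= n -> tri m <= tri n.
Proof. elim: n => [|n IH]; first by rewrite leqn0 => /eqP ->. rewrite leq_eqVlt => /orP [/eqP->//|].
rewrite ltnS => /IH; rewrite triS; lia. Qed.

Lemma tri_ge n : n <= tri n.
Proof. case: n => // n; rewrite triS; lia. Qed.

Lemma comput_tri : comput1 tri.
Proof.
apply: (comput_ext (h := fun v => precf 0 (fun i r => nth 0 (i :: r :: v) 1 + (nth 0 (i :: r :: v) 0).+1) (nth 0 v 0))).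
  by [].
apply: (comput_rec (hn := fun v => nth 0 v 0) (ha := fun v => 0) (hb := fun w => nth 0 w 1 + (nth 0 w 0).+1)); solve_comput.
Qed.
#[export] Hint Resolve comput_tri : compdb.

Lemma comput_cpair : comput2 cpair.
Proof.
apply: (comput_ext (h := fun v => tri (nth 0 v 0 + nth 0 v 1) + nth 0 v 1)).
  by move=> v _; rewrite cpair_tri.
solve_comput.
Qed.
#[export] Hint Resolve comput_cpair : compdb.

Definition diag z := precf 0 (fun i r => r + (if tri i.+1 - z == 0 then 1 else 0)) z.

Lemma diag_cpair a b : diag (cpair a b) = a + b.
Proof.
rewrite cpair_tri /diag.
set s := a + b; set z := tri s + b.
have Hz : s <= z by have := tri_ge s; lia.
suff H : forall i, precf 0 (fun i r => r + (if tri i.+1 - z == 0 then 1 else 0)) i = minn i s.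
  by rewrite H; lia.
elim=> [|i IH]; first by rewrite min0n.
rewrite /= IH.
case: (ltnP i s) => Hi.
- have : tri i.+1 <= tri s by apply: tri_mono.
  move=> H1; have -> : tri i.+1 - z == 0 by apply/eqP; lia.
  lia.
- have : tri s.+1 <= tri i.+1 by apply: tri_mono.
  rewrite triS => H1; have -> : (tri i.+1 - z == 0) = false by apply/eqP; rewrite /z; lia.
  lia.
Qed.

Lemma comput_diag : comput1 diag.
Proof.
apply: (comput_ext (h := fun v => precf 0 (fun i r => let w := i :: r :: v in
   nth 0 w 1 + (if tri (nth 0 w 0).+1 - nth 0 w 2 == 0 then 1 else 0)) (nth 0 v 0))).
  by [].
apply: (comput_rec (hn := fun v => nth 0 v 0) (ha := fun v => 0)
  (hb := fun w => nth 0 w 1 + (if tri (nth 0 w 0).+1 - nth 0 w 2 == 0 then 1 else 0))); solve_comput.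
Qed.
#[export] Hint Resolve comput_diag : compdb.

Definition unsnd z := z - tri (diag z).
Definition unfst z := diag z - unsnd z.

Lemma unsnd_cpair a b : unsnd (cpair a b) = b.
Proof. rewrite /unsnd diag_cpair cpair_tri; lia. Qed.
Lemma unfst_cpair a b : unfst (cpair a b) = a.
Proof. rewrite /unfst unsnd_cpair diag_cpair; lia. Qed.

Lemma comput_unsnd : comput1 unsnd.
Proof. rewrite /comput1 /unsnd; solve_comput. Qed.
#[export] Hint Resolve comput_unsnd : compdb.
Lemma comput_unfst : comput1 unfst.
Proof. rewrite /comput1 /unfst; solve_comput. Qed.
#[export] Hint Resolve comput_unfst : compdb.

Definition cons' h t := (cpair h t).+1.
Definition hd' l := unfst l.-1.
Definition tl' l := unsnd l.-1.
Lemma hd_cons h t : hd' (cons' h t) = h. Proof. by rewrite /hd' /cons' /= unfst_cpair. Qed.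
Lemma tl_cons h t : tl' (cons' h t) = t. Proof. by rewrite /tl' /cons' /= unsnd_cpair. Qed.
Lemma cons_neq0 h t : (cons' h t == 0) = false. Proof. by []. Qed.

Lemma comput_cons : comput2 cons'. Proof. rewrite /comput2 /cons'; solve_comput. Qed.
Lemma comput_hd : comput1 hd'. Proof. rewrite /comput1 /hd'; solve_comput. Qed.
Lemma comput_tl : comput1 tl'. Proof. rewrite /comput1 /tl'; solve_comput. Qed.
#[export] Hint Resolve comput_cons comput_hd comput_tl : compdb.

Definition tln n l := precf l (fun _ r => tl' r) n.
Lemma comput_tln : comput2 tln.
Proof.
apply: (comput_ext (h := fun v => precf (nth 0 v 1) (fun i r => tl' (nth 0 (i :: r :: v) 1)) (nth 0 v 0))).
  by [].
apply: (comput_rec (hn := fun v => nth 0 v 0) (ha := fun v => nth 0 v 1) (hb := fun w => tl' (nth 0 w 1))); solve_comput.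
Qed.
#[export] Hint Resolve comput_tln : compdb.

Fixpoint encl (s : seq nat) : nat := if s is x :: s' then cons' x (encl s') else 0.

Fixpoint enc (e : recf) : nat :=
  match e with
  | RZero => cpair 0 0
  | RSucc => cpair 1 0
  | RProj i => cpair 2 i
  | RComp f gs => cpair 3 (cpair (enc f) (encl (rev (map enc gs))))
  | RPrec f g => cpair 4 (cpair (enc f) (enc g))
  | RMu f => cpair 5 (enc f)
  end.

Definition step (z : nat) : nat :=
  let C := unfst z in let V := unsnd z in
  if C == 0 then z else
  let I := hd' C in let C' := tl' C in let t := unfst I in let p := unsnd I in
  let a := hd' V in let V1 := tl' V in
  if t == 0 then
    let et := unfst p in let ep := unsnd p in
    if et == 0 then cpair C' (cons' 0 V1)
    else if et == 1 then (if a == 0 then z else cpair C' (cons' (hd' a).+1 V1))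
    else if et == 2 then (if tln ep a == 0 then z else cpair C' (cons' (hd' (tln ep a)) V1))
    else if et == 3 then cpair (cons' (cpair 1 ep) C') (cons' 0 V)
    else if et == 4 then (if a == 0 then z else
       cpair (cons' (cpair 0 (unfst ep)) (cons' (cpair 3 (unsnd ep)) C'))
             (cons' (tl' a) (cons' 0 (cons' (hd' a) (cons' (tl' a) V1)))))
    else if et == 5 then cpair (cons' (cpair 0 ep) (cons' (cpair 4 ep) C')) (cons' (cons' 0 a) (cons' 0 V))
    else z
  else if t == 1 then
    (if unsnd p == 0 then cpair (cons' (cpair 0 (unfst p)) C') (cons' a (tl' V1))
     else cpair (cons' (cpair 0 (hd' (unsnd p))) (cons' (cpair 2 0)
                  (cons' (cpair 1 (cpair (unfst p) (tl' (unsnd p)))) C')))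
                (cons' (hd' V1) V))
  else if t == 2 then cpair C' (cons' (cons' a (hd' V1)) (tl' V1))
  else if t == 3 then
    (if hd' V1 == hd' (tl' V1) then cpair C' (cons' a (tl' (tl' (tl' V1))))
     else cpair (cons' (cpair 0 p) (cons' (cpair 3 p) C'))
                (cons' (cons' (hd' V1) (cons' a (hd' (tl' (tl' V1))))) (cons' (hd' V1).+1 (tl' V1))))
  else if t == 4 then
    (if a == 0 then cpair C' (cons' (hd' V1) (tl' (tl' V1)))
     else cpair (cons' (cpair 0 p) (cons' (cpair 4 p) C'))
                (cons' (cons' (hd' V1).+1 (hd' (tl' V1))) (cons' (hd' V1).+1 (tl' V1))))
  else z.

Lemma comput_step : comput1 step.
Proof. rewrite /comput1 /step; cbv zeta; solve_comput. Qed.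

Ltac stp := rewrite /step; cbv zeta; rewrite ?unfst_cpair ?unsnd_cpair ?hd_cons ?tl_cons ?unfst_cpair ?unsnd_cpair ?hd_cons ?tl_cons ?unfst_cpair ?unsnd_cpair ?hd_cons ?tl_cons ?cons_neq0 /=.

Lemma step_final V : step (cpair 0 V) = cpair 0 V.
Proof. by rewrite /step; cbv zeta; rewrite unfst_cpair. Qed.

Lemma step_zero C a V : step (cpair (cons' (cpair 0 (enc RZero)) C) (cons' a V)) = cpair C (cons' 0 V).
Proof. by stp. Qed.

Lemma step_succ C x v V : step (cpair (cons' (cpair 0 (enc RSucc)) C) (cons' (encl (x :: v)) V)) = cpair C (cons' x.+1 V).
Proof. by stp. Qed.

Lemma step_succ_nil C V : step (cpair (cons' (cpair 0 (enc RSucc)) C) (cons' (encl [::]) V)) = cpair (cons' (cpair 0 (enc RSucc)) C) (cons' (encl [::]) V).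
Proof. by stp. Qed.

Lemma tl_encl v : tl' (encl v) = encl (behead v).
Proof. case: v => [|x v] /=; last by rewrite tl_cons. by rewrite /tl' /unsnd /diag /=. Qed.

Lemma tln_encl i v : tln i (encl v) = encl (drop i v).
Proof.
elim: i v => [|i IH] v; first by rewrite drop0.
rewrite /tln /= -/(tln i (encl v)) IH tl_encl.
by elim: v i {IH} => [|x v IHv] [|i] //=; rewrite drop0.
Qed.

Lemma step_proj C i v V : i < size v ->
  step (cpair (cons' (cpair 0 (enc (RProj i))) C) (cons' (encl v) V)) = cpair C (cons' (nth 0 v i) V).
Proof.
move=> Hi; stp; rewrite tln_encl.
have : drop i v = nth 0 v i :: drop i.+1 v by rewrite (drop_nth 0 Hi).
by move=> -> /=; rewrite hd_cons.
Qed.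

Lemma step_proj_out C i v V : size v <= i ->
  step (cpair (cons' (cpair 0 (enc (RProj i))) C) (cons' (encl v) V)) = cpair (cons' (cpair 0 (enc (RProj i))) C) (cons' (encl v) V).
Proof. move=> Hi; stp; by rewrite tln_encl drop_oversize. Qed.

Lemma step_comp C f gs a V :
  step (cpair (cons' (cpair 0 (enc (RComp f gs))) C) (cons' a V)) =
  cpair (cons' (cpair 1 (cpair (enc f) (encl (rev (map enc gs))))) C) (cons' 0 (cons' a V)).
Proof. by stp. Qed.

Lemma step_prec C f g n v V :
  step (cpair (cons' (cpair 0 (enc (RPrec f g))) C) (cons' (encl (n :: v)) V)) =
  cpair (cons' (cpair 0 (enc f)) (cons' (cpair 3 (enc g)) C))
        (cons' (encl v) (cons' 0 (cons' n (cons' (encl v) V)))).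
Proof. by stp. Qed.

Lemma step_prec_nil C f g V :
  step (cpair (cons' (cpair 0 (enc (RPrec f g))) C) (cons' (encl [::]) V)) =
  cpair (cons' (cpair 0 (enc (RPrec f g))) C) (cons' (encl [::]) V).
Proof. by stp. Qed.

Lemma step_mu C f a V :
  step (cpair (cons' (cpair 0 (enc (RMu f))) C) (cons' a V)) =
  cpair (cons' (cpair 0 (enc f)) (cons' (cpair 4 (enc f)) C)) (cons' (cons' 0 a) (cons' 0 (cons' a V))).
Proof. by stp. Qed.

Lemma step_loop_nil C fc A args V :
  step (cpair (cons' (cpair 1 (cpair fc 0)) C) (cons' A (cons' args V))) =
  cpair (cons' (cpair 0 fc) C) (cons' A V).
Proof. by stp. Qed.

Lemma step_loop_cons C fc gc L A args V :
  step (cpair (cons' (cpair 1 (cpair fc (cons' gc L))) C) (cons' A (cons' args V))) =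
  cpair (cons' (cpair 0 gc) (cons' (cpair 2 0) (cons' (cpair 1 (cpair fc L)) C)))
        (cons' args (cons' A (cons' args V))).
Proof. by stp. Qed.

Lemma step_ccons C w A V :
  step (cpair (cons' (cpair 2 0) C) (cons' w (cons' A V))) = cpair C (cons' (cons' w A) V).
Proof. by stp. Qed.

Lemma step_prec_done C gc r i vc V :
  step (cpair (cons' (cpair 3 gc) C) (cons' r (cons' i (cons' i (cons' vc V))))) = cpair C (cons' r V).
Proof. by stp; rewrite eqxx. Qed.

Lemma step_prec_next C gc r i N vc V : i != N ->
  step (cpair (cons' (cpair 3 gc) C) (cons' r (cons' i (cons' N (cons' vc V))))) =
  cpair (cons' (cpair 0 gc) (cons' (cpair 3 gc) C))
        (cons' (cons' i (cons' r vc)) (cons' i.+1 (cons' N (cons' vc V)))).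
Proof. by move=> /negbTE H; stp; rewrite H. Qed.

Lemma step_mu_done C fc m vc V :
  step (cpair (cons' (cpair 4 fc) C) (cons' 0 (cons' m (cons' vc V)))) = cpair C (cons' m V).
Proof. by stp. Qed.

Lemma step_mu_next C fc k m vc V :
  step (cpair (cons' (cpair 4 fc) C) (cons' k.+1 (cons' m (cons' vc V)))) =
  cpair (cons' (cpair 0 fc) (cons' (cpair 4 fc) C))
        (cons' (cons' m.+1 vc) (cons' m.+1 (cons' vc V))).
Proof. by stp. Qed.

Definition run n z := iter n step z.
Definition reach s s' := exists n, run n s = s'.

Lemma runS n s : run n.+1 s = run n (step s).
Proof. by rewrite /run iterSr. Qed.
Lemma run_add m n s : run (m + n) s = run n (run m s).
Proof. by rewrite /run addnC iterD. Qed.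

Lemma reach_refl s : reach s s. Proof. by exists 0. Qed.
Lemma reach_trans s1 s2 s3 : reach s1 s2 -> reach s2 s3 -> reach s1 s3.
Proof. move=> [m <-] [n <-]; exists (m + n); by rewrite run_add. Qed.
Lemma reach_step s s' : reach (step s) s' -> reach s s'.
Proof. move=> [n <-]; exists n.+1; by rewrite runS. Qed.

Definition evst e v C V := cpair (cons' (cpair 0 (enc e)) C) (cons' (encl v) V).
Definition loopst f L (A v : seq nat) C V :=
  cpair (cons' (cpair 1 (cpair (enc f) (encl L))) C) (cons' (encl A) (cons' (encl v) V)).
Definition precst g r i N v C V :=
  cpair (cons' (cpair 3 (enc g)) C) (cons' r (cons' i (cons' N (cons' (encl v) V)))).
Definition must f res m v C V :=
  cpair (cons' (cpair 4 (enc f)) C) (cons' res (cons' m (cons' (encl v) V))).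

Lemma complete_all : forall e v y, ev e v y ->
  (forall C V, reach (evst e v C V) (cpair C (cons' y V))) /\
  (forall f g n v', e = RPrec f g -> v = n :: v' -> forall C V N, n <= N ->
     reach (cpair (cons' (cpair 0 (enc f)) (cons' (cpair 3 (enc g)) C))
                  (cons' (encl v') (cons' 0 (cons' N (cons' (encl v') V)))))
           (precst g y n N v' C V)).
Proof.
apply: (@ev_ind2 _ (fun gs v ws => forall f L A C V,
   reach (loopst f (rev (map enc gs) ++ L) A v C V) (loopst f L (ws ++ A) v C V))).
- move=> v; split=> // C V; apply: reach_step; rewrite step_zero; exact: reach_refl.
- move=> x v; split=> // C V; apply: reach_step; rewrite /evst step_succ; exact: reach_refl.
- move=> i v Hi; split=> // C V; apply: reach_step; rewrite /evst step_proj //; exact: reach_refl.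
- move=> f gs v ws y _ IHs _ [IHf _]; split=> // C V.
  apply: reach_step; rewrite /evst step_comp.
  have := IHs f [::] [::] C V; rewrite cats0 /loopst /= => H.
  apply: (reach_trans H); apply: reach_step; rewrite step_loop_nil.
  rewrite cats0; exact: IHf.
- move=> f g v y _ [IHf _].
  have aux : forall C V N, 0 <= N ->
     reach (cpair (cons' (cpair 0 (enc f)) (cons' (cpair 3 (enc g)) C))
                  (cons' (encl v) (cons' 0 (cons' N (cons' (encl v) V)))))
           (precst g y 0 N v C V).
    move=> C V N _; exact: IHf.
  split; last by move=> f' g' n v' [<- <-] [<- <-].
  move=> C V; apply: reach_step; rewrite /evst step_prec.
  apply: (reach_trans (aux _ _ _ isT)); apply: reach_step; rewrite step_prec_done.
  exact: reach_refl.
- move=> f g n v r y _ [_ IHp] _ [IHg _].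
  have aux : forall C V N, n.+1 <= N ->
     reach (cpair (cons' (cpair 0 (enc f)) (cons' (cpair 3 (enc g)) C))
                  (cons' (encl v) (cons' 0 (cons' N (cons' (encl v) V)))))
           (precst g y n.+1 N v C V).
    move=> C V N HN.
    apply: (reach_trans (IHp f g n v erefl erefl C V N (ltnW HN))).
    apply: reach_step; rewrite /precst step_prec_next; last by rewrite neq_ltn HN.
    exact: (IHg (cons' (cpair 3 (enc g)) C) (cons' n.+1 (cons' N (cons' (encl v) V)))).
  split; last by move=> f' g' n' v' [<- <-] [<- <-].
  move=> C V; apply: reach_step; rewrite /evst step_prec.
  apply: (reach_trans (aux _ _ _ (leqnn _))); apply: reach_step; rewrite step_prec_done.
  exact: reach_refl.
- move=> f v n Hn0 [IH0 _] Hlt; split=> // C V.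
  apply: reach_step; rewrite /evst step_mu.
  have key : forall m, m <= n -> exists r, ev f (m :: v) r /\
     reach (cpair (cons' (cpair 0 (enc f)) (cons' (cpair 4 (enc f)) C)) (cons' (encl (0 :: v)) (cons' 0 (cons' (encl v) V))))
           (must f r m v C V).
    elim=> [|m IHm] Hm.
    + case: (ltnP 0 n) => H0.
      * have [k [Hk [IHk _]]] := Hlt 0 H0; exists k.+1; split=> //; exact: IHk.
      * have E : n = 0 by lia.
        subst n; exists 0; split; first by [].

        exact: IH0.
    + have [r [Hr Hreach]] := IHm (ltnW Hm).
      have [k [Hk _]] := Hlt m Hm.
      have Er := ev_det Hr Hk; subst r.
      have [r' [Hr' IHr']] : exists r', ev f (m.+1 :: v) r' /\
          forall C V, reach (evst f (m.+1 :: v) C V) (cpair C (cons' r' V)).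
        case: (ltnP m.+1 n) => H1.
        * have [k' [Hk' [IHk' _]]] := Hlt _ H1; by exists k'.+1.
        * have E : m.+1 = n by lia.
          rewrite E; by exists 0.
      exists r'; split=> //; apply: (reach_trans Hreach); apply: reach_step.
      rewrite /must step_mu_next; exact: IHr'.
  have [r [Hr Hreach]] := key n (leqnn n).
  have Er := ev_det Hr Hn0; subst r.
  apply: (reach_trans Hreach); apply: reach_step; rewrite /must step_mu_done.
  exact: reach_refl.
- move=> v f L A C V /=; exact: reach_refl.
- move=> g gs v w ws _ [IHg _] _ IHs f L A C V.
  rewrite map_cons rev_cons cat_rcons.
  apply: (reach_trans (IHs f (enc g :: L) A C V)).
  apply: reach_step; rewrite /loopst /= step_loop_cons.
  apply: (reach_trans (IHg _ _)); apply: reach_step; rewrite step_ccons.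
  exact: reach_refl.
Qed.

Lemma complete e v y : ev e v y -> forall C V, reach (evst e v C V) (cpair C (cons' y V)).
Proof. by move=> /complete_all []. Qed.

Definition fin n s := unfst (run n s) == 0.

Lemma run_fix s n : step s = s -> run n s = s.
Proof. move=> H; elim: n => // n IH; by rewrite runS H. Qed.

Lemma fin_pos n s : fin n s -> unfst s != 0 -> exists n', n = n'.+1 /\ fin n' (step s).
Proof. case: n => [|n]; first by rewrite /fin /= => ->. by rewrite /fin runS => H _; exists n. Qed.

Lemma fin_fix n s : fin n s -> unfst s != 0 -> step s = s -> False.
Proof. by rewrite /fin => H1 H2 H3; rewrite run_fix // in H1; rewrite H1 in H2. Qed.

Lemma fin_after n s k s1 : fin n s -> run k s = s1 -> k <= n -> fin (n - k) s1.
Proof. by rewrite /fin => H <- Hk; rewrite -run_add subnKC. Qed.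

Lemma run_comb k1 k2 s s1 s2 : run k1 s = s1 -> run k2 s1 = s2 -> run (k1 + k2) s = s2.
Proof. by move=> <- <-; rewrite run_add. Qed.

Lemma evs_cat gs1 gs2 v ws1 ws2 : evs gs1 v ws1 -> evs gs2 v ws2 -> evs (gs1 ++ gs2) v (ws1 ++ ws2).
Proof. by elim=> //= g gs v' w ws Hg _ IH H2; constructor => //; apply: IH. Qed.

Lemma evs_rev gs v ws : evs gs v ws -> evs (rev gs) v (rev ws).
Proof.
elim=> [v'|g gs' v' w ws' Hg _ IH]; first by constructor.
rewrite !rev_cons -!cats1; apply: evs_cat => //; by constructor => //; constructor.
Qed.

Lemma unfst_ncons a b V : unfst (cpair (cons' a b) V) != 0.
Proof. by rewrite unfst_cpair. Qed.

Definition SE n := forall e v C V, fin n (evst e v C V) ->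
  exists y k, [/\ k <= n, ev e v y & run k (evst e v C V) = cpair C (cons' y V)].
Definition SC n := forall f gsL A v C V, fin n (loopst f (map enc gsL) A v C V) ->
  exists ws y k, [/\ k <= n, evs gsL v ws, ev f (catrev ws A) y &
     run k (loopst f (map enc gsL) A v C V) = cpair C (cons' y V)].
Definition SP n := forall f g i r N v C V, ev (RPrec f g) (i :: v) r -> fin n (precst g r i N v C V) ->
  exists y k, [/\ k <= n, ev (RPrec f g) (N :: v) y & run k (precst g r i N v C V) = cpair C (cons' y V)].
Definition SM n := forall f res m v C V, ev f (m :: v) res ->
  (forall m', m' < m -> exists k, ev f (m' :: v) k.+1) -> fin n (must f res m v C V) ->
  exists y k, [/\ k <= n, ev (RMu f) v y & run k (must f res m v C V) = cpair C (cons' y V)].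

Lemma sound_all n : [/\ SE n, SC n, SP n & SM n].
Proof.
elim/ltn_ind: n => n IH.
split.
- move=> e v C V Hf.
  have [n' [En Hf']] := fin_pos Hf (unfst_ncons _ _ _).
  subst n.
  case: e Hf Hf' => [|||f gs|f g|f].
  + move=> _ _; exists 0, 1; split=> //; [exact: evZ | by rewrite /evst runS step_zero].
  + case: v => [|x v] Hf.
    * move=> _; exfalso; apply: (fin_fix Hf (unfst_ncons _ _ _)); exact: step_succ_nil.
    * move=> _; exists x.+1, 1; split=> //; [exact: evS | by rewrite /evst runS step_succ].
  + move=> i Hf; case: (ltnP i (size v)) => Hi.
    * move=> _; exists (nth 0 v i), 1; split=> //; [exact: evP | by rewrite /evst runS step_proj].
    * move=> _; exfalso; apply: (fin_fix Hf (unfst_ncons _ _ _)); exact: step_proj_out.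
  + rewrite /evst step_comp => _ Hf'.
    have [_ HC _ _] := IH n' (ltnSn _).
    have := HC f (rev gs) [::] v C V; rewrite /loopst map_rev => /(_ Hf').
    move=> [ws [y [k [Hk Hws Hy Hrun]]]].
    exists y, k.+1; split=> //.
    * apply: (@evC _ _ _ (rev ws)); last by rewrite catrevE cats0 in Hy.
      by rewrite -[gs]revK; apply: evs_rev.
    * by rewrite runS step_comp.
  + case: v => [|n0 v] Hf.
    * move=> _; exfalso; apply: (fin_fix Hf (unfst_ncons _ _ _)); exact: step_prec_nil.
    rewrite /evst step_prec => Hf'.
    have [HE _ _ _] := IH n' (ltnSn _).
    have [y0 [k1 [Hk1 Hy0 Hrun1]]] := HE f v (cons' (cpair 3 (enc g)) C)
        (cons' 0 (cons' n0 (cons' (encl v) V))) Hf'.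
    have Hf2 := fin_after Hf' Hrun1 Hk1.
    have [_ _ HP _] := IH (n' - k1) ltac:(lia).
    have [y [k2 [Hk2 Hy Hrun2]]] := HP f g 0 y0 n0 v C V (evR0 g Hy0) Hf2.
    exists y, (k1 + k2).+1; split => //; first by lia.
    rewrite /evst runS step_prec; exact: run_comb Hrun1 Hrun2.
  + move=> Hf; rewrite /evst step_mu => Hf'.
    have [HE _ _ _] := IH n' (ltnSn _).
    have [r [k1 [Hk1 Hr Hrun1]]] := HE f (0 :: v) (cons' (cpair 4 (enc f)) C)
        (cons' 0 (cons' (encl v) V)) Hf'.
    have Hf2 := fin_after Hf' Hrun1 Hk1.
    have [_ _ _ HM] := IH (n' - k1) ltac:(lia).
    have [y [k2 [Hk2 Hy Hrun2]]] := HM f r 0 v C V Hr (fun m' (H : m' < 0) => False_ind _ (notF H)) Hf2.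
    exists y, (k1 + k2).+1; split => //; first by lia.
    rewrite /evst runS step_mu; exact: run_comb Hrun1 Hrun2.
- move=> f gsL A v C V Hf.
  have [n' [En Hf']] := fin_pos Hf (unfst_ncons _ _ _); subst n.
  have [HE _ _ _] := IH n' (ltnSn _).
  case: gsL Hf Hf' => [|g gs] Hf.
  + rewrite /loopst /= step_loop_nil => Hf'.
    have [y [k [Hk Hy Hrun]]] := HE f A C V Hf'.
    exists [::], y, k.+1; split => //; first exact: evs_nil.
    by rewrite runS /= step_loop_nil.
  + rewrite /loopst /= step_loop_cons => Hf'.
    set C2 := cons' (cpair 2 0) (cons' (cpair 1 (cpair (enc f) (encl (map enc gs)))) C).
    set V2 := cons' (encl A) (cons' (encl v) V).
    have [w [k1 [Hk1 Hw Hrun1]]] := HE g v C2 V2 Hf'.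
    have Hf2 := fin_after Hf' Hrun1 Hk1.
    have [n'' [En2 Hf3]] := fin_pos Hf2 (unfst_ncons _ _ _).
    rewrite /C2 /V2 step_ccons in Hf3.
    have [_ HC _ _] := IH n'' ltac:(lia).
    have [ws [y [k2 [Hk2 Hws Hy Hrun2]]]] := HC f gs (w :: A) v C V Hf3.
    exists (w :: ws), y, (k1 + k2.+1).+1; split => //; first by lia.
    * by constructor.
    * rewrite runS /= step_loop_cons; apply: (run_comb Hrun1).
      by rewrite runS /C2 /V2 step_ccons.
- move=> f g i r N v C V Hr Hf.
  have [n' [En Hf']] := fin_pos Hf (unfst_ncons _ _ _); subst n.
  have [HE _ _ _] := IH n' (ltnSn _).
  case: (eqVneq i N) => HiN.
  + subst N; exists r, 1; split => //; by rewrite runS /precst step_prec_done.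
  + move: Hf'; rewrite /precst step_prec_next // => Hf'.
    have [y1 [k1 [Hk1 Hy1 Hrun1]]] := HE g [:: i, r & v] (cons' (cpair 3 (enc g)) C)
        (cons' i.+1 (cons' N (cons' (encl v) V))) Hf'.
    have Hf2 := fin_after Hf' Hrun1 Hk1.
    have [_ _ HP _] := IH (n' - k1) ltac:(lia).
    have [y [k2 [Hk2 Hy Hrun2]]] := HP f g i.+1 y1 N v C V (evRS Hr Hy1) Hf2.
    exists y, (k1 + k2).+1; split => //; first by lia.
    rewrite runS /precst step_prec_next //; exact: run_comb Hrun1 Hrun2.
- move=> f res m v C V Hres Hlt Hf.
  have [n' [En Hf']] := fin_pos Hf (unfst_ncons _ _ _); subst n.
  have [HE _ _ _] := IH n' (ltnSn _).
  case: res Hres Hf Hf' => [|k] Hres Hf.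
  + move=> _; exists m, 1; split => //; first exact: evM.
    by rewrite runS /must step_mu_done.
  + rewrite /must step_mu_next => Hf'.
    have [r [k1 [Hk1 Hr Hrun1]]] := HE f (m.+1 :: v) (cons' (cpair 4 (enc f)) C)
        (cons' m.+1 (cons' (encl v) V)) Hf'.
    have Hf2 := fin_after Hf' Hrun1 Hk1.
    have [_ _ _ HM] := IH (n' - k1) ltac:(lia).
    have Hlt' : forall m', m' < m.+1 -> exists k, ev f (m' :: v) k.+1.
      move=> m'; rewrite ltnS leq_eqVlt => /orP [/eqP -> | H]; [by exists k | exact: Hlt].
    have [y [k2 [Hk2 Hy Hrun2]]] := HM f r m.+1 v C V Hr Hlt' Hf2.
    exists y, (k1 + k2).+1; split => //; first by lia.
    rewrite runS /must step_mu_next; exact: run_comb Hrun1 Hrun2.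
Qed.

Lemma sound e v C V n : fin n (evst e v C V) ->
  exists y k, [/\ k <= n, ev e v y & run k (evst e v C V) = cpair C (cons' y V)].
Proof. by have [HE _ _ _] := sound_all n; apply: HE. Qed.

Definition updv (cmpf : nat -> nat -> nat) (o : option nat) (r : nat) : nat :=
  match o with
  | None => r
  | Some w => if r == 0 then w.+1 else if cmpf r.-1 w == 0 then r else w.+1
  end.

Definition Rproc cmpf (val : nat -> option nat) t := precf 0 (fun k r => updv cmpf (val k) r) t.+1.

Definition Fproc D (rho : nat -> D) cmpf val t : option D :=
  if Rproc cmpf val t is y.+1 then Some (rho y) else None.

Definition cmp_spec D (lt : D -> D -> Prop) (rho : nat -> D) cmpf :=
  forall m n, (cmpf m n == 0) = false <-> lt (rho m) (rho n).

Lemma Fproc_mono D (lt : D -> D -> Prop) rho cmpf val :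
  (forall a b c, lt a b -> lt b c -> lt a c) -> cmp_spec lt rho cmpf ->
  forall t t' d d', t <= t' -> Fproc rho cmpf val t = Some d -> Fproc rho cmpf val t' = Some d' ->
  d = d' \/ lt d d'.
Proof.
move=> Htr Hc.
pose Q r r' := r = 0 \/ r = r' \/ (r <> 0 /\ r' <> 0 /\ lt (rho r.-1) (rho r'.-1)).
have Qtr : forall a b c, Q a b -> Q b c -> Q a c.
  move=> a b c [->|[->|[Ha [Hb Hab]]]] H2; [by left | exact: H2 |].
  case: H2 => [Hb0|[<-|[_ [Hc0 Hbc]]]]; first by [].
  - by right; right.
  - right; right; split=> //; split=> //; exact: Htr Hab Hbc.
have Qupd : forall o r, Q r (updv cmpf o r).
  move=> [w|] r; rewrite /Q /updv; last by right; left.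
  case: eqP => [->|Hr]; first by left.
  case E: (cmpf r.-1 w == 0); first by right; left.
  right; right; split=> //; split=> //; by apply/Hc.
have QR : forall t k, Q (Rproc cmpf val t) (Rproc cmpf val (t + k)).
  move=> t; elim=> [|k IH]; first by rewrite addn0; right; left.
  apply: (Qtr _ _ _ IH); rewrite addnS /Rproc [in X in Q _ X]/=; exact: Qupd.
move=> t t' d d' Htt'; rewrite /Fproc.
have := QR t (t' - t); rewrite subnKC //.
case: (Rproc cmpf val t) => // y; case: (Rproc cmpf val t') => // y' HQ [<-] [<-].
case: HQ => [//|[[->]|[_ [_ H]]]]; [by left | by right].
Qed.

Lemma Fproc_sound D (rho : nat -> D) cmpf val (P : D -> Prop) :
  (forall k w, val k = Some w -> P (rho w)) ->
  forall t d, Fproc rho cmpf val t = Some d -> P d.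
Proof.
move=> Hs t d; rewrite /Fproc.
suff : forall t, Rproc cmpf val t = 0 \/ P (rho (Rproc cmpf val t).-1).
  by move=> /(_ t); case: (Rproc cmpf val t) => // y [//|H] [<-].
move=> t0; rewrite /Rproc; elim: t0.+1 => [|n IH] /=; first by left.
rewrite /updv; case E: (val n) => [w|] //.
case: eqP => _; first by right; exact: Hs E.
by case: (cmpf _ w == 0) => //; right; exact: Hs E.
Qed.

Lemma Fproc_comp D (lt : D -> D -> Prop) rho cmpf val (P : D -> Prop) :
  cmp_spec lt rho cmpf ->
  (forall k w, val k = Some w -> P (rho w)) ->
  (forall d1 d2, P d1 -> P d2 -> [\/ d1 = d2, lt d1 d2 | lt d2 d1]) ->
  forall k w, val k = Some w ->
  exists t d', Fproc rho cmpf val t = Some d' /\ (d' = rho w \/ lt (rho w) d').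
Proof.
move=> Hc Hs Hcmp k w Hk; exists k.
have Hinv : forall n, precf 0 (fun k r => updv cmpf (val k) r) n = 0 \/
      P (rho (precf 0 (fun k r => updv cmpf (val k) r) n).-1).
  elim=> [|n IH] /=; first by left.
  rewrite /updv; case E: (val n) => [w'|] //.
  case: eqP => _; first by right; exact: Hs E.
  by case: (cmpf _ w' == 0) => //; right; exact: Hs E.
rewrite /Fproc /Rproc /= Hk /updv.
have := Hinv k.
case: (precf 0 _ k) => [|r] /= HI; first by eexists; split; [reflexivity| left].
case E: (cmpf r w == 0); last by eexists; split; [reflexivity| left].
eexists; split; first reflexivity.
case: HI => // HP.
case: (Hcmp _ _ HP (Hs _ _ Hk)) => [->|H|H]; [by left | | by right].
by move/Hc: H; rewrite E.
Qed.

Lemma finite_sub D (Q : D -> Prop) (l : list D) :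
  (forall d, Q d -> List.In d l) -> exists l', forall d, Q d <-> List.In d l'.
Proof.
elim: l Q => [|a l IH] Q HQ.
  by exists nil => d; split => // /HQ.
have [l' Hl'] : exists l', forall d, (Q d /\ d <> a) <-> List.In d l'.
  apply: IH => d [H1 H2]; case: (HQ d H1) => // E; by case: H2.
case: (classic (Q a)) => Ha.
- exists (a :: l') => d; split.
  + move=> Hd; case: (classic (d = a)) => [->|Hne]; first by left.
    by right; apply/Hl'.
  + by case=> [<-|/Hl' []].
- exists l' => d; split.
  + move=> Hd; apply/Hl'; split=> // E; by subst.
  + by move/Hl' => [].
Qed.

Fixpoint fvals D (f : nat -> option D) n : list D :=
  match n with 0 => nil | n'.+1 => match f n' with Some d => d :: fvals f n' | None => fvals f n' end end.

Lemma fvals_in D (f : nat -> option D) n s d : s < n -> f s = Some d -> List.In d (fvals f n).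
Proof.
elim: n => // n IH; rewrite ltnS leq_eqVlt => /orP [/eqP <- | Hs] Hf /=.
  by rewrite Hf; left.
case: (f n) => [d'|]; [right|]; exact: IH.
Qed.

Lemma maxval_equiv D (lt : D -> D -> Prop) (Y : bspace) (f F : elt Y -> nat -> option D) y :
  (forall d, ~ lt d d) -> (forall a b c, lt a b -> lt b c -> lt a c) ->
  (forall s s' d d', s <= s' -> f y s = Some d -> f y s' = Some d' -> d = d' \/ lt d d') ->
  (forall t d, F y t = Some d -> exists s, f y s = Some d) ->
  (forall s d, f y s = Some d -> exists t d', F y t = Some d' /\ (d' = d \/ lt d d')) ->
  forall d, is_maxval lt f y d <-> is_maxval lt F y d.
Proof.
move=> Hirr Htr Hmono HFs HFc d; split.
- move=> [[l Hl] [t0 Ht0] Hmax]; split.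
  + apply: (finite_sub (l := l)) => d0 [t Ht].
    have [s Hs] := HFs _ _ Ht; apply/Hl; by exists s.
  + have [t [d' [Ht Hd']]] := HFc _ _ Ht0.
    exists t; rewrite Ht; congr Some.
    have [s Hs] := HFs _ _ Ht.
    case: (Hmax _ _ Hs) => // H1; case: Hd' => // H2.
    by case: (Hirr d); apply: Htr H2 H1.
  + move=> t d' Ht; have [s Hs] := HFs _ _ Ht; exact: Hmax Hs.
- move=> [[l Hl] [t0 Ht0] Hmax].
  have [s0 Hs0] := HFs _ _ Ht0.
  have Hmaxf : forall s d0, f y s = Some d0 -> d0 = d \/ lt d0 d.
    move=> s d0 Hs; have [t [d' [Ht Hd']]] := HFc _ _ Hs.
    case: (Hmax _ _ Ht) => [E|H1].
    * rewrite -E; case: Hd' => [->|H]; [by left|by right].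
    * right; case: Hd' => [E|H]; [by rewrite -E | exact: Htr H H1].
  split.
  + apply: (finite_sub (l := d :: fvals (f y) s0)) => d0 [s Hs].
    case: (ltnP s s0) => H.
    * by right; apply: fvals_in Hs.
    * left; case: (Hmono _ _ _ _ H Hs0 Hs) => // H1.
      case: (Hmaxf _ _ Hs) => [E|H2]; first by [].
      by case: (Hirr d); apply: Htr H1 H2.
  + by exists s0.
  + exact: Hmaxf.
Qed.

Definition maxop D (lt : D -> D -> Prop) (Y : bspace) (f : elt Y -> nat -> option D) (y : elt Y) : option D :=
  match excluded_middle_informative (exists d, is_maxval lt f y d) with
  | left H => Some (proj1_sig (constructive_indefinite_description _ H))
  | right _ => None
  end.

Lemma maxval_uniq D (lt : D -> D -> Prop) (Y : bspace) (f : elt Y -> nat -> option D) y d d' :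
  (forall d, ~ lt d d) -> (forall a b c, lt a b -> lt b c -> lt a c) ->
  is_maxval lt f y d -> is_maxval lt f y d' -> d = d'.
Proof.
move=> Hirr Htr [_ [t Ht] H1] [_ [t' Ht'] H2].
case: (H2 _ _ Ht) => // Hl1; case: (H1 _ _ Ht') => [E|Hl2]; first by [].
by case: (Hirr d); apply: Htr Hl1 Hl2.
Qed.

Lemma maxop_spec D (lt : D -> D -> Prop) (Y : bspace) (f : elt Y -> nat -> option D) :
  (forall d, ~ lt d d) -> (forall a b c, lt a b -> lt b c -> lt a c) ->
  is_max_of lt f (maxop lt f).
Proof.
move=> Hirr Htr y d; rewrite /maxop.
case: excluded_middle_informative => [H|H].
- case: constructive_indefinite_description => d0 Hd0 /=; split.
  + by move=> [<-].
  + by move=> Hd; rewrite (maxval_uniq Hirr Htr Hd0 Hd).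
- split=> // Hd; case: H; by exists d.
Qed.

Lemma run_precf n z : run n z = precf z (fun _ r => step r) n.
Proof. by elim: n => // n IH; rewrite /run iterS -/(run n z) IH. Qed.

Lemma comput_run : comput2 run.
Proof.
apply: (comput_ext (h := fun v => precf (nth 0 v 1) (fun i r => step (nth 0 (i :: r :: v) 1)) (nth 0 v 0))).
  by move=> v _; rewrite run_precf.
apply: (comput_rec (hn := fun v => nth 0 v 0) (ha := fun v => nth 0 v 1) (hb := fun w => step (nth 0 w 1)));
try solve_comput.
Qed.
#[export] Hint Resolve comput_run comput_step : compdb.

Definition mstate c a s := cpair (cons' (cpair 0 c) 0) (cons' (cons' a (cons' s 0)) 0).

Definition val c a k : option nat :=
  if unfst (run (unsnd k) (mstate c a (unfst k))) == 0
  then Some (hd' (unsnd (run (unsnd k) (mstate c a (unfst k))))) else None.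

Definition upd cmpf c a k r :=
  if unfst (run (unsnd k) (mstate c a (unfst k))) == 0 then
    (if r == 0 then (hd' (unsnd (run (unsnd k) (mstate c a (unfst k))))).+1
     else if cmpf r.-1 (hd' (unsnd (run (unsnd k) (mstate c a (unfst k))))) == 0 then r
     else (hd' (unsnd (run (unsnd k) (mstate c a (unfst k))))).+1)
  else r.

Lemma upd_eq cmpf c a k r : upd cmpf c a k r = updv cmpf (val c a k) r.
Proof. by rewrite /upd /val; case: ifP. Qed.

Definition Gz cmpf z t := precf 0 (fun k r => upd cmpf (unfst z) (unsnd z) k r) t.+1.

Lemma eq_precf a F G n : (forall k r, F k r = G k r) -> precf a F n = precf a G n.
Proof. by move=> H; elim: n => //= n ->. Qed.

Lemma Gz_eq cmpf z t : Gz cmpf z t = Rproc cmpf (val (unfst z) (unsnd z)) t.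
Proof. by apply: eq_precf => k r; rewrite upd_eq. Qed.

Lemma comput_Gz cmpf : comput2 cmpf -> comput2 (Gz cmpf).
Proof.
move=> Hc.
apply: (comput_ext (h := fun v => precf 0 (fun i r => let w := i :: r :: v in
   upd cmpf (unfst (nth 0 w 2)) (unsnd (nth 0 w 2)) (nth 0 w 0) (nth 0 w 1)) (nth 0 v 1).+1)).
  by [].
apply: (comput_rec (hn := fun v => (nth 0 v 1).+1) (ha := fun v => 0)
  (hb := fun w => upd cmpf (unfst (nth 0 w 2)) (unsnd (nth 0 w 2)) (nth 0 w 0) (nth 0 w 1))); try solve_comput.
Qed.

Lemma mu_prog G : comput2 G -> exists e, forall z t y, ev e [:: z; t] y <-> G z t = y.+1.
Proof.
move=> HG.
have [ea Ha] : comput 3 (fun v => ((nth 0 v 0).+1 - G (nth 0 v 1) (nth 0 v 2)) +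
                                   (G (nth 0 v 1) (nth 0 v 2) - (nth 0 v 0).+1)) by solve_comput.
exists (RMu ea) => z t y; split.
- move=> H; inversion H; subst.
  have := ev_det (Ha [:: y; z; t] erefl) H1 => /= E; lia.
- move=> E; apply: evM.
  + have := Ha [:: y; z; t] erefl; rewrite /= E; by rewrite subnn.
  + move=> m Hm; have := Ha [:: m; z; t] erefl; rewrite /= E.
    set u := _ + _ => Hu; exists u.-1; have -> : u.-1.+1 = u by rewrite /u; lia.
    exact: Hu.
Qed.

Lemma val_sound e a k w : val (enc e) a k = Some w -> ev e [:: a; unfst k] w.
Proof.
rewrite /val; case: ifP => // Hf [<-].
have [y [k' [Hk' Hy Hrun]]] := @sound e [:: a; unfst k] 0 0 (unsnd k) Hf.
have : run (unsnd k) (evst e [:: a; unfst k] 0 0) = cpair 0 (cons' y 0).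
  by rewrite -(subnKC Hk') run_add Hrun run_fix // step_final.
rewrite /mstate /evst /= => ->; by rewrite unsnd_cpair hd_cons.
Qed.

Lemma val_complete e a s w : ev e [:: a; s] w -> exists k, val (enc e) a k = Some w.
Proof.
move=> H; have [st Hst] := complete H 0 0.
exists (cpair s st); rewrite /val unfst_cpair unsnd_cpair.
rewrite /mstate /evst /= in Hst *; by rewrite Hst unfst_cpair unsnd_cpair hd_cons.
Qed.

Theorem mainTheorem6 (X : bspace) (D : Type) (lt : D -> D -> Prop) (rho : nat -> D) :
  comp_poset lt rho ->
  exists E : elt (NX X) -> option D,
    MaxPR lt rho E /\
    (forall g : elt X -> option D,
        MaxPR lt rho g <-> exists n : nat, forall x : elt X, g x = E (n, x)).
Proof.
move=> [Hirr Htr Hinj Hsurj [ecmp Hecmp]].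
pose cmpf m n := if excluded_middle_informative (lt (rho m) (rho n)) then 1 else 0.
have Hcc : comput2 cmpf.
  exists ecmp; move=> [|m [|n [|]]] // _; rewrite /cmpf /=.
  by case: excluded_middle_informative => H; apply Hecmp.
have Hspec : cmp_spec lt rho cmpf.
  by move=> m n; rewrite /cmpf; case: excluded_middle_informative.
have HG := comput_Gz Hcc.
pose fE (p : elt (NX X)) t := Fproc rho cmpf (val (unfst (code p)) (unsnd (code p))) t.
have Fiff : forall vl t y, Fproc rho cmpf vl t = Some (rho y) <-> Rproc cmpf vl t = y.+1.
  move=> vl t y; rewrite /Fproc; case: (Rproc cmpf vl t) => [|y'] //; split=> // [[]|[->]] //.
  by move/Hinj=> ->.
have Hcode : forall n (x : elt X), code ((n, x) : elt (NX X)) = cpair n (code x) by [].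
exists (maxop lt fE); split.
- exists fE; split.
  + have [e He] := mu_prog HG; exists e => p t y.
    by rewrite He Gz_eq Fiff.
  + move=> p t t' d d'; exact: Fproc_mono.
  + exact: maxop_spec.
- move=> g; split.
  + move=> [f [[ef Hef] Hmono Hmax]].
    exists (enc ef) => x.
    pose P d := exists s, f x s = Some d.
    have Hs : forall k w, val (enc ef) (code x) k = Some w -> P (rho w).
      move=> k w /val_sound H; exists (unfst k); exact/Hef.
    have Hcmp : forall d1 d2, P d1 -> P d2 -> [\/ d1 = d2, lt d1 d2 | lt d2 d1].
      move=> d1 d2 [s1 H1] [s2 H2]; case: (leqP s1 s2) => Hs12.
      * by case: (Hmono _ _ _ _ _ Hs12 H1 H2) => H; [constructor 1 | constructor 2].
      * by case: (Hmono _ _ _ _ _ (ltnW Hs12) H2 H1) => H; [constructor 1 | constructor 3].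
    have Heqv : forall d, is_maxval lt f x d <-> is_maxval lt (fun x t => fE (enc ef, x) t) x d.
      apply: maxval_equiv => //.
      * move=> s s' d d'; exact: Hmono.
      * move=> t d; rewrite /fE Hcode unfst_cpair unsnd_cpair; exact: (Fproc_sound (P := P) Hs).
      * move=> s d Hsd.
        have [w Hw] := Hsurj d; subst d.
        have [k Hk] := val_complete (proj2 (Hef x s w) Hsd).
        have [t [d' [Ht Hd']]] := Fproc_comp Hspec Hs Hcmp Hk.
        exists t, d'; split=> //; by rewrite /fE Hcode unfst_cpair unsnd_cpair.
    have Hm := @maxop_spec D lt (NX X) fE Hirr Htr (enc ef, x).
    case Eg: (g x) => [d|]; case EE: (maxop lt fE (enc ef, x)) => [d'|] //.
    * have := proj1 (Hm d') EE; move/Heqv/Hmax; by rewrite Eg.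
    * by move: Eg => /Hmax /Heqv /Hm; rewrite EE.
    * by have := proj1 (Hm d') EE; move/Heqv/Hmax; rewrite Eg.
  + move=> [n Hn].
    exists (fun x t => fE (n, x) t); split.
    * have HG' : comput2 (fun a t => Gz cmpf (cpair n a) t) by rewrite /comput2; solve_comput.
      have [e He] := mu_prog HG'; exists e => x t y.
      by rewrite He Gz_eq Fiff.
    * move=> x t t' d d'; exact: Fproc_mono.
    * move=> x d; rewrite Hn; exact: maxop_spec.
Qed.
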